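(* Let $N\ge 1$, $\alpha=(\alpha_1,\dots,\alpha_N)\in\mathbb R^N$, and let $\dot W$ be a real symmetric $N\times N$ matrix with $\dot W_{ij}\ge 0$ for $i\neq j$ and $\sum_{j=1}^N\dot W_{ij}=0$ for every $i$. Put $W_\varepsilon=\mathrm{Id}+\varepsilon\dot W$ and let $\mathcal P_\varepsilon$ be the operator defined in the context. Fix $k\in\mathbb Z$. (1) For every $\varepsilon>0$, the operator $\mathcal P_\varepsilon:L^2(M)\to L^2(M)$ has $N$ eigenvalues $\lambda^{(1)}_{k,\varepsilon},\dots,\lambda^{(N)}_{k,\varepsilon}$ (counted with algebraic multiplicity) with $N$ linearly independent (generalised) eigenfunctions $F^{(\ell)}_{k,\varepsilon}$ of the separable form $F^{(\ell)}_{k,\varepsilon}(j,x)=f^{(\ell)}_{k,\varepsilon}(j)\,e^{2\pi i k x}$, $\ell=1,\dots,N$, where $f^{(\ell)}_{k,\varepsilon}:\{1,\dots,N\}\to\mathbb C$. (2) For all sufficiently small $\varepsilon>0$, these eigenvalues can be labelled so that $$\bigl|\lambda^{(\ell)}_{k,\varepsilon}-e^{-2\pi i k\alpha_\ell}\bigr|\le 2\max_{1\le m\le N}|\dot W_{mm}|\,\varepsilon\qquad\text{for all }\ell\in\{1,\dots,N\}.$$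
   Context: $\mathbb S^1=\mathbb R/\mathbb Z$, $M=\{1,\dots,N\}\times\mathbb S^1$, equipped with the product $m$ of the uniform probability measure on $\{1,\dots,N\}$ and Lebesgue measure on $\mathbb S^1$; $L^2(M)$ is the complex Hilbert space $L^2(M,m)$. For $\varepsilon\ge 0$ the (noisy rotation) transfer operator is $(\mathcal P_\varepsilon F)(j,x)=\sum_{j'=1}^N (W_\varepsilon)_{jj'}\,F(j',x-\alpha_j)$ for $F\in L^2(M)$, $(j,x)\in M$. A generalised eigenfunction with eigenvalue $\lambda$ is a nonzero $F$ with $(\mathcal P_\varepsilon-\lambda)^nF=0$ for some $n\ge1$. *)

(* Defs.v *)
From HB Require Import structures.
From mathcomp Require Import all_boot all_order all_algebra.
From mathcomp Require Import all_classical all_reals.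
From mathcomp Require Import trigo.
From mathcomp.real_closed Require Import complex.
Set Implicit Arguments. Unset Strict Implicit. Unset Printing Implicit Defensive.
Import Order.TTheory GRing.Theory Num.Theory.
Local Open Scope ring_scope.
Local Open Scope complex_scope.

Definition e2pi {R : realType} (t : R) : R[i] :=
  Complex (cos (2 * pi * t)) (sin (2 * pi * t)).

(* Functions on M = {1..N} x S^1, with S^1 = R/Z represented by 1-periodic
   functions of x : R (all functions considered below are 1-periodic). *)
Definition Mfun (R : realType) (N : nat) := 'I_N -> R -> R[i].

Definition transfer {R : realType} {N : nat} (alpha : 'I_N -> R) (W : 'M[R]_N)
  (F : Mfun R N) : Mfun R N :=
  fun j x => \sum_(j' < N) (W j j')%:C * F j' (x - alpha j).

Definition Weps {R : realType} {N : nat} (Wdot : 'M[R]_N) (eps : R) : 'M[R]_N :=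
  1%:M + eps *: Wdot.

Definition gen_eigenfunction {R : realType} {N : nat} (P : Mfun R N -> Mfun R N)
  (lam : R[i]) (F : Mfun R N) : Prop :=
  (exists j x, F j x != 0) /\
  exists n : nat, (0 < n)%N /\
    forall j x, iter n (fun G : Mfun R N => fun j x => P G j x - lam * G j x) F j x = 0.

Definition lin_indep {R : realType} {N : nat} (Fs : 'I_N -> Mfun R N) : Prop :=
  forall c : 'I_N -> R[i],
    (forall j x, \sum_(l < N) c l * Fs l j x = 0) -> forall l, c l = 0.

Definition sep_fun {R : realType} {N : nat} (k : int) (f : 'I_N -> R[i]) : Mfun R N :=
  fun j x => f j * e2pi (k%:~R * x).

Definition mode_spectrum {R : realType} {N : nat} (alpha : 'I_N -> R)
  (Wdot : 'M[R]_N) (eps : R) (k : int)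
  (lam : 'I_N -> R[i]) (f : 'I_N -> 'I_N -> R[i]) : Prop :=
  (forall l, gen_eigenfunction (transfer alpha (Weps Wdot eps)) (lam l) (sep_fun k (f l)))
  /\ lin_indep (fun l => sep_fun k (f l)).

(* Main.v *)
Require Import Defs.
From HB Require Import structures.
From mathcomp Require Import all_boot all_order all_algebra.
From mathcomp Require Import all_classical all_reals.
From mathcomp Require Import trigo.
From mathcomp.real_closed Require Import complex.
From mathcomp Require Import spectral perm fingroup zify ring lra.
Set Implicit Arguments. Unset Strict Implicit. Unset Printing Implicit Defensive.
Import Order.TTheory GRing.Theory Num.Theory.
Local Open Scope ring_scope.

Lemma trig_mulmx (R : pzRingType) n (A B : 'M[R]_n) :
  is_trig_mx A -> is_trig_mx B ->
  is_trig_mx (A *m B) /\ forall i, (A *m B) i i = A i i * B i i.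
Proof.
move=> /is_trig_mxP hA /is_trig_mxP hB; split.
  apply/is_trig_mxP => i j lij; rewrite !mxE big1 // => k _.
  case: (ltnP i k) => [lik|lki]; first by rewrite hA ?mul0r.
  by rewrite hB ?mulr0 //; exact: leq_ltn_trans lki lij.
move=> i; rewrite !mxE (bigD1 i) //= big1 ?addr0 // => k nki.
case: (ltngtP i k) => [lik|lki|eik]; first by rewrite hA ?mul0r.
  by rewrite hB ?mulr0.
by rewrite (ord_inj eik) eqxx in nki.
Qed.

Lemma trig_exp (R : pzRingType) n (A : 'M[R]_n) m : is_trig_mx A ->
  is_trig_mx (A ^+ m) /\ forall i, (A ^+ m) i i = A i i ^+ m.
Proof.
move=> hA; elim: m => [|m [IH1 IH2]].
  rewrite expr0 (_ : (1 : 'M[R]_n) = 1%:M) //; split; first exact: scalar_mx_is_trig.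
  by move=> i; rewrite !mxE eqxx.
rewrite exprS -mulmxE; have [h1 h2] := trig_mulmx hA IH1; split => // i.
by rewrite h2 IH2 exprS.
Qed.

Lemma trig_subs (R : pzRingType) n (A : 'M[R]_n) a : is_trig_mx A ->
  is_trig_mx (A - a%:M) /\ forall i, (A - a%:M) i i = A i i - a.
Proof.
move=> /is_trig_mxP hA; split.
  apply/is_trig_mxP => i j lij; rewrite !mxE hA //.
  by rewrite (_ : (i == j) = false) ?mulr0n ?subr0 //; apply/negbTE; rewrite neq_ltn lij.
by move=> i; rewrite !mxE eqxx mulr1n.
Qed.

Lemma rank_trig (F : fieldType) n (M : 'M[F]_n) : is_trig_mx M ->
  (#|[set i | M i i != 0%R]| <= \rank M)%N.
Proof.
move=> /is_trig_mxP hM; set S := [set i | M i i != 0%R].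
pose f : 'I_#|S| -> 'I_n := enum_val.
have free : row_free (rowsub f M).
  rewrite -kermx_eq0; apply/rowV0P => v /sub_kermxP hv.
  apply/rowP => a0; rewrite mxE; apply/eqP; apply/negPn/negP => va0.
  have [a va amax] := @arg_maxnP _ a0 (fun a => v 0 a != 0) (fun a => (f a : nat)) va0.
  move/rowP: hv => /(_ (f a)); rewrite !mxE (bigD1 a) //= big1 ?addr0.
    move/eqP; rewrite mxE mulf_eq0 (negbTE va) /=.
    by have := enum_valP a; rewrite inE => /negbTE ->.
  move=> b nba; rewrite mxE; case: (eqVneq (v 0 b) 0) => [->|vb]; first by rewrite mul0r.
  rewrite hM ?mulr0 //; have hb : (f b <= f a)%N by exact: amax.
  rewrite ltn_neqAle hb andbT; apply/negP => /eqP /ord_inj /enum_val_inj e.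
  by rewrite e eqxx in nba.
have := mxrankS (rowsub_sub f M); move/eqP: free => ->.
done.
Qed.

Lemma rank_sum_le (F : fieldType) n m (A : 'I_m -> 'M[F]_n) :
  (\rank (\sum_(j < m) A j)%MS <= \sum_(j < m) \rank (A j))%N.
Proof.
elim/big_ind2: _ => //; first by rewrite mxrank0.
move=> M a M' b ha hb; apply: leq_trans (mxrank_adds_leqif a b).1 _.
exact: leq_add.
Qed.

Lemma sum_count_undup (T : eqType) (l : seq T) :
  (\sum_(x <- undup l) count_mem x l)%N = size l.
Proof.
rewrite -(perm_size (perm_count_undup l)) size_flatten /shape -map_comp.
by rewrite sumnE big_map; apply: eq_bigr => x _ /=; rewrite size_nseq.
Qed.

Lemma dvdp_big (R : idomainType) (I : Type) (s : seq I) (F G : I -> {poly R}) :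
  (forall x, F x %| G x) -> \prod_(x <- s) F x %| \prod_(x <- s) G x.
Proof.
move=> h; elim: s => [|x s IH]; first by rewrite !big_nil dvdpp.
by rewrite !big_cons dvdp_mul.
Qed.

Lemma conj_exp (F : fieldType) n (P X : 'M[F]_n) m : P \in unitmx ->
  (invmx P *m X *m P) ^+ m = invmx P *m X ^+ m *m P.
Proof.
move=> Pu; elim: m => [|m IH].
  by rewrite !expr0 (_ : (1 : 'M[F]_n) = 1%:M) // mulmx1 mulVmx.
by rewrite exprS IH -mulmxE !mulmxA mulmxK // exprS -mulmxE !mulmxA.
Qed.

Lemma gen_basis (C : numClosedFieldType) n (B : 'M[C]_n.+1) :
  exists t : 'I_n.+1 -> C, exists F : 'M[C]_n.+1,
  [/\ F \in unitmx,
      forall i, row i F *m (B - (t i)%:M) ^+ n.+1 = 0,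
      forall i, eigenvalue B (t i) &
      forall m, \tr (B ^+ m) = \sum_i t i ^+ m].
Proof.
have [P Pun hT] := Schur B (ltn0Sn n).
have Pu : P \in unitmx := unitarymx_unit Pun.
move: hT; rewrite /similar_to /= conjumx // => hT.
set T := P *m B *m invmx P in hT.
have BE : B = invmx P *m T *m P by rewrite /T !mulmxA mulVmx // mul1mx mulmxKV.
pose t i := T i i.
exists t.
have hsub (l : C) : B - l%:M = invmx P *m (T - l%:M) *m P.
  by rewrite mulmxBr mulmxBl -BE mul_mx_scalar -scalemxAl mulVmx // scalemx1.
have rkc (X : 'M[C]_n.+1) : \rank (invmx P *m X *m P) = \rank X.
  rewrite mxrankMfree ?row_free_unit //; apply/eqP; rewrite eqn_leq mxrankM_maxr /=.
  by rewrite -{1}(mulKVmx Pu X) mxrankM_maxr.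
pose V l := kermx ((B - l%:M) ^+ n.+1).
pose cnt l := #|[set i | t i == l]|.
have rkV l : (\rank (V l) <= cnt l)%N.
  rewrite mxrank_ker hsub conj_exp // rkc.
  have [h1 h2] := trig_subs l hT.
  have [h3 h4] := trig_exp n.+1 h1.
  have := rank_trig h3.
  have -> : [set i | ((T - l%:M) ^+ n.+1) i i != 0%R] = ~: [set i | t i == l].
    by apply/setP => i; rewrite !inE h4 h2 expf_eq0 /= subr_eq0.
  have := cardsC [set i | t i == l]; rewrite card_ord /cnt => e hr.
  by rewrite leq_subLR -[X in (X <= _)%N]e addnC leq_add2r.
set l0 := [seq t i | i <- enum 'I_n.+1].
set s := undup l0.
have ts i : t i \in s by rewrite mem_undup map_f ?mem_enum.
have cntE l : cnt l = count_mem l l0.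
  rewrite /cnt count_map -sum1_count -sum1_card big_enum_cond.
  by apply: eq_bigl => i; rewrite !inE.
have sumcnt : (\sum_(j < size s) cnt (nth 0%R s j))%N = n.+1.
  have := sum_count_undup l0; rewrite size_map size_enum_ord (big_nth 0%R) big_mkord => <-.
  by apply: eq_bigr => j _; exact: cntE.
have gE l : kermxpoly B (('X - l%:P) ^+ n.+1) = V l := geigenspaceE B l.
have full : (1%:M <= \sum_(j < size s) V (nth 0%R s j))%MS.
  have := @kermxpoly_prod _ _ B _ predT (fun j : 'I_(size s) => ('X - (nth 0%R s j)%:P) ^+ n.+1).
  case=> [i j _ _ nji|].
    rewrite coprimep_expr // coprimep_expl // coprimep_XsubC root_XsubC.
    by rewrite nth_uniq ?undup_uniq // eq_sym.
  move=> _ h; move: (h _ 1%:M) => {h} [_ h].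
  rewrite (eq_bigr _ (fun j _ => gE _)) in h.
  set q := \prod_(i | _) _ in h.
  suff hK : (1%:M <= kermxpoly B q)%MS by move: hK; rewrite h.
  rewrite /kermxpoly.
  have -> : horner_mx B q = 0.
    rewrite BE horner_mx_uconjC //.
    suff -> : horner_mx T q = 0 by rewrite mulmx0 mul0mx.
    have /dvdpP [r ->] : char_poly T %| q.
      rewrite char_poly_trig //.
      have -> : \prod_(i < n.+1) ('X - (T i i)%:P) =
                \prod_(x <- s) ('X - x%:P) ^+ count_mem x l0.
        by rewrite prodr_undup_exp_count big_map big_enum.
      rewrite (big_nth 0%R) big_mkord /q; apply: dvdp_big => j.
      by rewrite dvdp_exp2l // (leq_trans (count_size _ _)) // size_map size_enum_ord.
    by rewrite rmorphM /= Cayley_Hamilton mulr0.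
  by rewrite kermx0 submx_refl.
have rkeq l : cnt l = \rank (V l).
  case: (boolP (l \in s)) => hl; last first.
    have c0 : cnt l = 0%N.
      apply/eqP; rewrite cards_eq0; apply/eqP/setP => i; rewrite !inE.
      by apply/negbTE; apply: contraNneq hl => <-; exact: ts.
    by move: (rkV l); rewrite c0 leqn0 => /eqP ->.
  have hsum : (\sum_(j < size s) \rank (V (nth 0%R s j)) = n.+1)%N.
    apply/eqP; rewrite eqn_leq; apply/andP; split.
      rewrite -[X in (_ <= X)%N]sumcnt; apply: leq_sum => j _; exact: rkV.
    apply: leq_trans (rank_sum_le _).
    by have := mxrankS full; rewrite mxrank1.
  have := sumnB (index_enum 'I_(size s)) (P := predT)
    (E1 := fun j => \rank (V (nth 0%R s j))) (E2 := fun j => cnt (nth 0%R s j))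
    (fun j _ => rkV _).
  rewrite sumcnt hsum subnn => /eqP; rewrite sum_nat_eq0 => /forallP hj.
  have ij : (index l s < size s)%N by rewrite index_mem.
  have := hj (Ordinal ij); rewrite /= nth_index // subn_eq0 => h.
  by apply/eqP; rewrite eqn_leq h rkV.
have memi i : i \in [set i' | t i' == t i] by rewrite inE.
pose F := \matrix_(i, j) row_base (V (t i)) (cast_ord (rkeq (t i)) (enum_rank_in (memi i) i)) j.
have rowF i : row i F = row (cast_ord (rkeq (t i)) (enum_rank_in (memi i) i)) (row_base (V (t i))).
  by apply/rowP => j; rewrite !mxE.
exists F; split.
- rewrite -row_full_unit -sub1mx; apply: submx_trans full _; apply/sumsmx_subP => j _.
  set l := nth 0%R s j.
  rewrite -(eq_row_base (V l)); apply/row_subP => k.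
  set k' := cast_ord (esym (rkeq l)) k.
  set i := enum_val k'.
  have ti : t i = l by have := enum_valP k'; rewrite inE => /eqP.
  have gen : forall mu (e : t i = mu) (x0 : i \in [set i' | t i' == mu]),
      row i F = row (cast_ord (rkeq mu) (enum_rank_in x0 i)) (row_base (V mu)).
    move=> mu e; case: mu / e => x0; rewrite rowF.
    by rewrite (bool_irrelevance x0 (memi i)).
  have -> : row k (row_base (V l)) = row i F.
    by rewrite (gen l ti (enum_valP k')) enum_valK_in cast_ordKV.
  exact: row_sub.
- move=> i; apply/sub_kermxP; rewrite rowF.
  by apply: submx_trans (row_sub _ _) _; rewrite eq_row_base.
- move=> i; apply: (eigenvalue_conjmx (stablemx_unit B Pu)); first by rewrite row_free_unit.
  have ev : eigenvalue T (t i).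
    rewrite eigenvalue_root_char char_poly_trig // rootE horner_prod.
    by rewrite (bigD1 i) //= hornerXsubC subrr mul0r.
  by rewrite unfold_in conjumx //; exact: ev.
- move=> m; rewrite BE conj_exp // mxtrace_mulC mulKVmx //.
  by have [_ h] := trig_exp m hT; apply: eq_bigr => i _; rewrite h.
Qed.

Lemma poly_bound (C : numDomainType) (p : {poly C}) (h : C) : `|h| <= 1 ->
  `|p.[h] - p.[0]| <= `|h| * \sum_(i < size p) `|p`_i.+1|.
Proof.
move=> h1; rewrite horner_coef0 (horner_coef_wide h (leqnSn (size p))).
rewrite big_ord_recl /= expr0 mulr1 addrC addKr.
apply: le_trans (ler_norm_sum _ _ _) _; rewrite mulr_sumr; apply: ler_sum => i _.
rewrite normrM normrX mulrC exprS -mulrA ler_wpM2l //.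
rewrite -[X in _ <= X]mul1r ler_wpM2r //; exact: exprn_ile1.
Qed.

Lemma nat_close (C : numDomainType) (a b : nat) : `|a%:R - b%:R : C| < 1 -> a = b.
Proof.
case: (ltngtP a b) => hab; last by [].
  rewrite distrC -natrB; last exact: ltnW.
  rewrite normr_nat -(mulr1n 1) ltr_nat ltnS leqn0 subn_eq0.
  by rewrite leqNgt hab.
rewrite -natrB; last exact: ltnW.
rewrite normr_nat -(mulr1n 1) ltr_nat ltnS leqn0 subn_eq0.
by rewrite leqNgt hab.
Qed.

Lemma tr_horner (C : numClosedFieldType) n (Bp : 'M[{poly C}]_n.+1) (x : C) m :
  (\tr (Bp ^+ m)).[x] = \tr ((map_mx (horner_eval x) Bp) ^+ m).
Proof. by rewrite -rmorphXn /= trace_map_mx. Qed.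

Lemma q_eval (C : numClosedFieldType) n (Bp : 'M[{poly C}]_n.+1) (g : {poly C}) x
    (u : 'I_n.+1 -> C) :
  (forall m, \tr ((map_mx (horner_eval x) Bp) ^+ m) = \sum_i u i ^+ m) ->
  (\sum_(m < size g) (g`_m)%:P * \tr (Bp ^+ m)).[x] = \sum_i g.[u i].
Proof.
move=> h; rewrite horner_sum.
under eq_bigr => m _ do rewrite hornerM hornerC tr_horner h mulr_sumr.
rewrite exchange_big /=; apply: eq_bigr => i _; rewrite horner_coef.
by [].
Qed.

Lemma count_sum (T : eqType) n (f : 'I_n -> T) z :
  count_mem z [seq f i | i <- enum 'I_n] = (\sum_(i | f i == z) 1)%N.
Proof.
rewrite count_map -sum1_count big_enum_cond; apply: eq_bigl => i.
by rewrite !inE.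
Qed.

Lemma count_match (C : numClosedFieldType) n (om : 'I_n.+1 -> C) (Bp : 'M[{poly C}]_n.+1) :
  is_trig_mx (map_mx (horner_eval 0) Bp) ->
  (forall i, (map_mx (horner_eval 0) Bp) i i = om i) ->
  exists K : C, 0 <= K /\ forall (x r : C) (t : 'I_n.+1 -> C),
    `|x| <= 1 -> 0 <= r -> r <= 1 ->
    (forall m, \tr ((map_mx (horner_eval x) Bp) ^+ m) = \sum_i t i ^+ m) ->
    (forall i, exists l, `|t i - om l| <= r) ->
    `|x| * K + r * K < 1 ->
    exists s : 'S_n.+1, forall l, `|t (s l) - om l| <= r.
Proof.
move=> htrig hdiag.
pose g (l0 : 'I_n.+1) : {poly C} :=
  \prod_(l | om l != om l0) (('X - (om l)%:P) * ((om l0 - om l)^-1)%:P).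
have gE l0 l : (g l0).[om l] = (om l == om l0)%:R.
  rewrite horner_prod; case: eqP => [e|ne].
    apply: big1 => l' hl'; rewrite hornerM hornerXsubC hornerC e mulfV //.
    by rewrite subr_eq0 eq_sym.
  rewrite (bigD1 l) /=; last by apply/eqP.
  by rewrite hornerM hornerXsubC subrr mul0r mul0r.
pose Kp (p : {poly C}) := \sum_(i < size p) `|p`_i.+1|.
have Kp0 p : 0 <= Kp p by apply: sumr_ge0 => i _.
pose q l0 := \sum_(m < size (g l0)) ((g l0)`_m)%:P * \tr (Bp ^+ m).
pose K1 l0 := \sum_l Kp ((g l0) \Po ('X + (om l)%:P)).
have K10 l0 : 0 <= K1 l0 by apply: sumr_ge0 => l _.
pose K := \sum_l0 (n.+1%:R * K1 l0 + Kp (q l0)).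
have Kge l0 : (n.+1%:R * K1 l0 <= K) /\ (Kp (q l0) <= K).
  have h : n.+1%:R * K1 l0 + Kp (q l0) <= K.
    rewrite /K (bigD1 l0) //= lerDl; apply: sumr_ge0 => i _.
    by rewrite addr_ge0 // mulr_ge0.
  split; apply: le_trans h.
    by rewrite lerDl.
  by rewrite lerDr mulr_ge0.
exists K; split.
  by apply: sumr_ge0 => i _; rewrite addr_ge0 // mulr_ge0.
move=> x r t hx hr0 hr1 htr hnear hsmall.
have [m hm] := fin_all_exists hnear.
have htr0 : forall k, \tr ((map_mx (horner_eval 0) Bp) ^+ k) = \sum_i om i ^+ k.
  move=> k; have [_ h] := trig_exp k htrig.
  by rewrite /mxtrace; apply: eq_bigr => i _; rewrite h hdiag.
have cnt l0 : (\sum_(l | om l == om l0) 1 = \sum_(i | om (m i) == om l0) 1)%N.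
  apply/(@nat_close C); rewrite !natr_sum.
  have SA : \sum_(l | om l == om l0) 1%:R = \sum_l (g l0).[om l] :> C.
    rewrite big_mkcond /=; apply: eq_bigr => l _; rewrite gE.
    by case: eqP.
  have SB : \sum_(i | om (m i) == om l0) 1%:R = \sum_i (g l0).[om (m i)] :> C.
    rewrite big_mkcond /=; apply: eq_bigr => l _; rewrite gE.
    by case: eqP.
  rewrite SA SB -(q_eval (g l0) htr0).
  have -> : (q l0).[0] - \sum_i (g l0).[om (m i)] = ((q l0).[0] - (q l0).[x]) +
      (\sum_i (g l0).[t i] - \sum_i (g l0).[om (m i)]).
    by rewrite (q_eval (g l0) htr) addrA subrK.
  apply: le_lt_trans (ler_normD _ _) _.
  apply: le_lt_trans hsmall; apply: lerD.
    rewrite distrC; apply: le_trans (poly_bound (q l0) hx) _.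
    by rewrite ler_wpM2l //; case: (Kge l0).
  rewrite -sumrB.
  apply: le_trans (ler_norm_sum _ _ _) _.
  apply: le_trans (_ : \sum_(i < n.+1) r * K1 l0 <= _).
    apply: ler_sum => i _.
    set w := om (m i).
    have e1 : (g l0).[t i] = ((g l0) \Po ('X + w%:P)).[t i - w].
      by rewrite horner_comp hornerD hornerX hornerC subrK.
    have e2 : (g l0).[w] = ((g l0) \Po ('X + w%:P)).[0].
      by rewrite horner_comp hornerD hornerX hornerC add0r.
    rewrite e1 e2; apply: le_trans (poly_bound _ _) _.
      by apply: le_trans (hm i) hr1.
    apply: ler_pM; [by [] | exact: Kp0 | exact: hm |].
    rewrite /K1 (bigD1 (m i)) //= lerDl; apply: sumr_ge0 => ? _; exact: Kp0.
  rewrite sumr_const card_ord -mulr_natl mulrCA ler_wpM2l //.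
  by case: (Kge l0).
pose T1 := [tuple om l | l < n.+1].
pose T2 := [tuple om (m i) | i < n.+1].
have hperm : perm_eq T1 T2.
  apply/allP => z hz /=.
  have [l0 ->] : exists l0, z = om l0.
    move: hz; rewrite mem_cat => /orP [] /mapP [i _ ->]; [by exists i | by exists (m i)].
  by rewrite !count_sum; apply/eqP; exact: cnt l0.
have [p hp] := tuple_permP hperm.
have hT : T1 = [tuple tnth T2 (p i) | i < n.+1] := val_inj hp.
exists p => l.
have := congr1 (fun T => tnth T l) hT; rewrite /= !tnth_mktuple => ->.
exact: hm.
Qed.

Local Open Scope complex_scope.

Section Op.
Variable R : realType.
Local Notation C := R[i].

Lemma e2piD (a b : R) : e2pi (a + b) = e2pi a * e2pi b.
Proof.
rewrite /e2pi mulrDr cosD sinD /=.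
by congr Complex; rewrite addrC.
Qed.

Lemma e2pi0 : e2pi (0 : R) = 1.
Proof. by rewrite /e2pi mulr0 cos0 sin0. Qed.

Lemma norm_e2pi (a : R) : `|e2pi a| = 1.
Proof.
have -> : `|e2pi a| = (ComplexField.Normc.normc (e2pi a))%:C by [].
by rewrite /e2pi /ComplexField.Normc.normc cos2Dsin2 sqrtr1.
Qed.

Variables (N : nat) (alpha : 'I_N -> R) (Wdot : 'M[R]_N) (k : int).

Definition om (j : 'I_N) : C := e2pi (- (k%:~R * alpha j)).
Definition Bm (eps : R) : 'M[C]_N := \matrix_(i0 < N, j0 < N) (real_complex R (Weps Wdot eps j0 i0) * om j0).

Lemma transfer_sep eps (v : 'rV[C]_N) :
  transfer alpha (Weps Wdot eps) (sep_fun k (fun j => v 0 j)) =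
  sep_fun k (fun j => (v *m Bm eps) 0 j).
Proof.
apply: funext => j; apply: funext => x.
rewrite /transfer /sep_fun !mxE mulr_suml; apply: eq_bigr => a _.
rewrite !mxE mulrBr -addrC e2piD /om; set u := e2pi _; set w := e2pi _.
ring.
Qed.

Lemma iter_sep eps lam (v : 'rV[C]_N) m :
  iter m (fun G : Mfun R N => fun j x => transfer alpha (Weps Wdot eps) G j x - lam * G j x)
    (sep_fun k (fun j => v 0 j))
  = sep_fun k (fun j => (v *m (Bm eps - lam%:M) ^+ m) 0 j).
Proof.
elim: m => [|m IH] /=.
  by rewrite expr0 (_ : (1 : 'M[C]_N) = 1%:M) // mulmx1.
rewrite IH transfer_sep; apply: funext => j; apply: funext => x.
rewrite /sep_fun exprSr -mulmxE mulmxA mulmxBr mul_mx_scalar !mxE; ring.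
Qed.

Lemma mode_of eps (t : 'I_N -> C) (F : 'M[C]_N) (s : 'S_N) :
  (0 < N)%N -> F \in unitmx -> (forall i, row i F *m (Bm eps - (t i)%:M) ^+ N = 0) ->
  mode_spectrum alpha Wdot eps k (fun l => t (s l)) (fun l j => F (s l) j).
Proof.
move=> hN Fu hF; split.
- move=> l; split.
  + have hr : row (s l) F != 0.
      apply/negP => /eqP h0.
      have : row (s l) F *m invmx F = 0 by rewrite h0 mul0mx.
      rewrite rowE mulmxK // => /matrixP /(_ 0 (s l)); rewrite !mxE !eqxx /= => /eqP.
      by rewrite oner_eq0.
    case: (pickP (fun j => F (s l) j != 0)) => [j hj|h0].
      by exists j, 0; rewrite /sep_fun mulr0 e2pi0 mulr1.
    exfalso; move/negP: hr; apply; apply/eqP/rowP => j; rewrite !mxE.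
    by move/negbFE/eqP: (h0 j).
  + exists N; split => // j x.
    have -> : sep_fun k (fun j => F (s l) j) = sep_fun k (fun j => (row (s l) F) 0 j).
      by apply: funext => ?; apply: funext => ?; rewrite /sep_fun mxE.
    by rewrite iter_sep hF /sep_fun mxE mul0r.
- move=> c hc l.
  pose cv := \row_i c ((s^-1)%g i).
  have h0 : cv *m F = 0.
    apply/rowP => j; rewrite !mxE; have := hc j 0.
    rewrite /sep_fun mulr0 e2pi0 => h; rewrite -[RHS]h.
    rewrite (reindex_inj (@perm_inj _ s)) /=; apply: eq_bigr => i _.
    by rewrite !mxE permK mulr1.
  have : cv = 0 by rewrite -(mulmxK Fu cv) h0 mul0mx.
  by move/rowP/(_ (s l)); rewrite !mxE permK.
Qed.

Lemma Weps_entry eps (a b : 'I_N) : Weps Wdot eps a b = (a == b)%:R + eps * Wdot a b.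
Proof. by rewrite /Weps !mxE. Qed.

Lemma gersh eps (t : C) (v : 'rV[C]_N) : 0 <= eps ->
  (forall i j : 'I_N, i != j -> 0 <= Wdot i j) -> (forall i, \sum_j Wdot i j = 0) ->
  v != 0 -> v *m Bm eps = t *: v ->
  exists j, `|t - om j| <= (- (2 * eps * Wdot j j))%:C /\ Wdot j j <= 0.
Proof.
move=> he hoff hrow vn0 hv.
have hdiag j : Wdot j j = - \sum_(a | a != j) Wdot j a.
  by have := hrow j; rewrite (bigD1 j) //= => h; apply/eqP; rewrite -addr_eq0 h.
have hoffs j : 0 <= \sum_(a | a != j) Wdot j a.
  by apply: sumr_ge0 => a naj; apply: hoff; rewrite eq_sym.
have [j0 hj0] : exists j0, v 0 j0 != 0.
  case: (pickP (fun j => v 0 j != 0)) => [j hj|h0]; first by exists j.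
  exfalso; move/negP: vn0; apply; apply/eqP/rowP => j; rewrite !mxE.
  by move/negbFE/eqP: (h0 j).
have [j _ jmax] := @real_arg_maxP _ _ j0 predT (fun a => `|v 0 a|) isT (fun i _ => normr_real _).
exists j; split; last by rewrite hdiag oppr_le0.
have vj : 0 < `|v 0 j|.
  by apply: lt_le_trans (jmax j0 isT); rewrite normr_gt0.
move/rowP: hv => /(_ j); rewrite !mxE (bigD1 j) //= !mxE eqxx.
move=> e.
have e2 : (t - (1 + eps * Wdot j j)%:C * om j) * v 0 j =
    \sum_(a | a != j) v 0 a * ((eps * Wdot j a)%:C * om j).
  rewrite mulrBl -e [X in _ - X]mulrC addrAC subrr add0r; apply: eq_bigr => a naj.
  by rewrite !mxE eq_sym (negbTE naj) add0r.
have b1 : `|t - (1 + eps * Wdot j j)%:C * om j| <= (- (eps * Wdot j j))%:C.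
  rewrite -(ler_pM2r vj) -normrM e2.
  apply: le_trans (ler_norm_sum _ _ _) _.
  apply: le_trans (_ : \sum_(a | a != j) `|v 0 j| * (eps * Wdot j a)%:C <= _).
    apply: ler_sum => a naj; rewrite !normrM norm_e2pi mulr1.
    rewrite (@ger0_norm _ (eps * Wdot j a)%:C); last by rewrite ler0c mulr_ge0 // hoff // eq_sym.
    apply: ler_wpM2r; last exact: jmax.
    by rewrite ler0c mulr_ge0 // hoff // eq_sym.
  rewrite -mulr_sumr mulrC; apply: ler_wpM2r; first exact: ltW.
  have -> : \sum_(a | a != j) (eps * Wdot j a)%:C = (eps * \sum_(a | a != j) Wdot j a)%:C.
    by rewrite mulr_sumr rmorph_sum.
  by rewrite lecR hdiag mulrN opprK.
set X := (1 + eps * Wdot j j)%:C * om j in b1 *.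
have hw : eps * Wdot j j <= 0 by rewrite mulr_ge0_le0 // hdiag oppr_le0.
have b2 : `|X - om j| <= (- (eps * Wdot j j))%:C.
  rewrite /X -{2}(mul1r (om j)) -mulrBl normrM norm_e2pi mulr1 rmorphD rmorph1 addrC addKr.
  rewrite ler0_norm; first by rewrite rmorphN.
  by rewrite -oppr_ge0 -rmorphN ler0c oppr_ge0.
have -> : t - om j = (t - X) + (X - om j) by rewrite addrA subrK.
apply: le_trans (ler_normD _ _) _.
have -> : - (2 * eps * Wdot j j) = - (eps * Wdot j j) + - (eps * Wdot j j) by ring.
rewrite rmorphD; exact: lerD b1 b2.
Qed.
End Op.


Theorem proposition2p2 (R : realType) (N : nat) (hN : (0 < N)%N)
  (alpha : 'I_N -> R) (Wdot : 'M[R]_N)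
  (hsym : Wdot^T = Wdot)
  (hoff : forall i j : 'I_N, i != j -> 0 <= Wdot i j)
  (hrow : forall i : 'I_N, \sum_(j < N) Wdot i j = 0)
  (k : int) :
  (forall eps : R, 0 < eps ->
     exists (lam : 'I_N -> R[i]) (f : 'I_N -> 'I_N -> R[i]),
       mode_spectrum alpha Wdot eps k lam f)
  /\
  (exists eps0 : R, 0 < eps0 /\
     forall eps : R, 0 < eps -> eps < eps0 ->
       exists (lam : 'I_N -> R[i]) (f : 'I_N -> 'I_N -> R[i]),
         mode_spectrum alpha Wdot eps k lam f /\
         forall l : 'I_N,
           `|lam l - e2pi (- (k%:~R * alpha l))|
             <= (2 * \big[Num.max/0]_(m < N) `|Wdot m m| * eps)%:C).
Proof.
case: N hN alpha Wdot hsym hoff hrow => [//|n] hN alpha Wdot _ hoff hrow.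
split.
  move=> eps heps.
  have [t [F [Fu hF _ _]]] := gen_basis (Bm alpha Wdot k eps).
  exists (fun l => t ((1%g : 'S_n.+1) l)), (fun l j => F ((1%g : 'S_n.+1) l) j).
  exact: mode_of.
pose Bp : 'M[{poly R[i]}]_n.+1 := \matrix_(a < n.+1, b < n.+1)
  (((real_complex R ((1%:M : 'M[R]_n.+1) b a))%:P + 'X * (real_complex R (Wdot b a))%:P)
    * (om alpha k b)%:P).
have hB0 : map_mx (horner_eval 0) Bp = \matrix_(a < n.+1, b < n.+1)
    (real_complex R ((1%:M : 'M[R]_n.+1) b a) * om alpha k b).
  by apply/matrixP => a b; rewrite !mxE /= horner_evalE !hornerE.
have hB0t : is_trig_mx (map_mx (horner_eval 0) Bp).
  rewrite hB0; apply/is_trig_mxP => a b lab; rewrite !mxE.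
  by rewrite (_ : (b == a) = false) ?mulr0n ?mul0r //; apply/negbTE; rewrite neq_ltn lab orbT.
have hB0d i : (map_mx (horner_eval 0) Bp) i i = om alpha k i.
  by rewrite hB0 !mxE eqxx mulr1n mul1r.
have hBe (eps : R) : map_mx (horner_eval (real_complex R eps)) Bp = Bm alpha Wdot k eps.
  apply/matrixP => a b; rewrite !mxE /= horner_evalE !hornerE.
  by rewrite rmorphD rmorphM.
have [K [K0 hK]] := count_match hB0t hB0d.
set Mx := \big[Num.max/0]_(m < n.+1) `|Wdot m m|.
have hMx j : `|Wdot j j| <= Mx by exact: le_bigmax.
have Mx0 : 0 <= Mx by apply: le_trans (hMx ord0).
set KR := complex.Re K.
have KE : K = KR%:C.
  by rewrite [LHS]complexE (ger0_Im K0) mulr0 addr0.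
have KR0 : 0 <= KR by rewrite -ler0c -KE.
set D := 1 + 2 * Mx + (1 + 2 * Mx) * KR.
have D1 : 1 <= D.
  by rewrite /D -addrA lerDl addr_ge0 ?mulr_ge0 ?addr_ge0 ?mulr_ge0.
have D0 : 0 < D by apply: lt_le_trans D1.
exists D^-1; split; first by rewrite invr_gt0.
move=> eps he heD.
have heD' : eps * D < 1 by rewrite -(ltr_pM2r D0) mulVf ?gt_eqF in heD.
have [t [F [Fu hF hev htr]]] := gen_basis (Bm alpha Wdot k eps).
have hp3 : 0 <= eps * ((1 + 2 * Mx) * KR).
  by rewrite mulr_ge0 ?(ltW he) ?mulr_ge0 ?addr_ge0 ?mulr_ge0.
have hp2 : 0 <= eps * Mx by rewrite mulr_ge0 ?(ltW he).
have hp4 : 0 <= eps * KR by rewrite mulr_ge0 ?(ltW he).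
rewrite /D in heD'.
have hnear i : exists l, `|t i - om alpha k l| <= (2 * Mx * eps)%:C.
  have /eigenvalueP [v hv vn0] := hev i.
  have [j [hj hjj]] := gersh (ltW he) hoff hrow vn0 hv.
  exists j; apply: le_trans hj _; rewrite lecR.
  have := hMx j; rewrite ler0_norm // => hm.
  nra.
have := hK (real_complex R eps) (2 * Mx * eps)%:C t.
case.
- by rewrite ger0_norm ?ler0c ?(ltW he) // lecR; nra.
- by rewrite ler0c mulr_ge0 ?mulr_ge0 ?(ltW he).
- by rewrite lecR; nra.
- by move=> m; rewrite hBe.
- exact: hnear.
- rewrite ger0_norm ?ler0c ?(ltW he) // KE -!rmorphM -rmorphD ltcR.
  nra.
move=> s hs.
exists (fun l => t (s l)), (fun l j => F (s l) j); split.
  exact: mode_of.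
exact: hs.
Qed.
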